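(* (1) Let $T=T((v_1,1),\dots,(v_l,1);0)$ with $l\ge2$ and let $\mathbb{G}=\mathbb{G}(T)$. For any positive integers $k_1,\dots,k_l$ there exist a non-negative integer $q$ and a finite index subgroup $H$ of $\mathbb{G}$ such that $H\cong\mathbb{G}(S)$, where $S=T((v_1,k_1),\dots,(v_l,k_l);q)$. In particular $\mathbb{G}(S)$ and $\mathbb{G}(T)$ are commensurable. (2) If $\mathbb{G}=\mathbb{G}(T)$ with $T=T((d,2);0)$, then for any integer $k>2$ there exists a finite index subgroup $H$ of $\mathbb{G}$ with $H\cong\mathbb{G}(S)$, where $S=T((d,k);0)$.
   Context: For a finite simplicial graph $\Gamma$, $\mathbb{G}(\Gamma)$ is the right-angled Artin group with generators the vertices of $\Gamma$ and relations $[u,v]=1$ for each edge. Two groups are commensurable if they have isomorphic finite index subgroups. Encoding of trees of diameter 4: in a finite tree of diameter 4 the middle vertex of any path of length 4 is the same vertex $c$, the center; leaves adjacent to $c$ are hair vertices; other neighbours of $c$ are pivots. $T((d_1,k_1),\dots,(d_l,k_l);q)$ is the tree of diameter 4 with exactly $q\ge0$ hair vertices and, for each $i$, exactly $k_i$ pivots adjacent to exactly $d_i$ leaves, where $l,d_i,k_i$ are positive integers, $d_1<\dots<d_l$, and either $l\ge2$ or ($l=1$ and $k_1\ge2$). *)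

(* Defs.v *)
From mathcomp Require Import all_boot.
Set Implicit Arguments. Unset Strict Implicit. Unset Printing Implicit Defensive.

(** An element is represented by a word over
  V × bool ((x,false) = x, (x,true) = x^-1); two words represent the same
  element iff they are related by [raag_eq E], the congruence generated by
  free cancellation and commutation of adjacent letters along edges. *)

Section RAAG.
Variables (V : eqType) (E : rel V).

Definition word := seq (V * bool).

Inductive raag_eq : word -> word -> Prop :=
| re_refl w : raag_eq w w
| re_sym u w : raag_eq u w -> raag_eq w u
| re_trans u w z : raag_eq u w -> raag_eq w z -> raag_eq u z
| re_cancel (u w : word) (x : V) (b : bool) :
    raag_eq (u ++ (x, b) :: (x, ~~ b) :: w) (u ++ w)
| re_comm (u w : word) (x y : V) (b c : bool) : E x y ->
    raag_eq (u ++ (x, b) :: (y, c) :: w) (u ++ (y, c) :: (x, b) :: w).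

Definition winv (w : word) : word := rev (map (fun p => (p.1, ~~ p.2)) w).

Definition is_subgroup (H : word -> Prop) : Prop :=
  [/\ (forall u w, raag_eq u w -> H u -> H w),
      H [::],
      (forall u w, H u -> H w -> H (u ++ w)) &
      (forall u, H u -> H (winv u))].

Definition finite_index (H : word -> Prop) : Prop :=
  exists reps : seq word, forall w, exists r, r \in reps /\
    exists h, H h /\ raag_eq w (r ++ h).

End RAAG.

Definition iso_to_subgroup (V' V : eqType) (E' : rel V') (E : rel V)
  (H : word V -> Prop) : Prop :=
  exists f : word V' -> word V,
    [/\ (forall a b, raag_eq E' a b -> raag_eq E (f a) (f b)),
        (forall a b, raag_eq E (f (a ++ b)) (f a ++ f b)),
        (forall a b, raag_eq E (f a) (f b) -> raag_eq E' a b),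
        (forall a, H (f a)) &
        (forall w, H w -> exists a, raag_eq E (f a) w)].

(** Vertices: the center, q hair vertices, for each i < l exactly k_i pivots
  (i,j), and for each pivot (i,j) exactly d_i leaves.  Edges: center–hair,
  center–pivot, pivot–its leaves. *)

Section Tree.
Variables (l : nat) (d k : 'I_l -> nat) (q : nat).

Definition pivT : finType := {i : 'I_l & 'I_(k i)}.
Definition leafT : finType := {p : pivT & 'I_(d (tag p))}.
Definition tvert : finType := (unit + 'I_q + pivT + leafT)%type.

Definition tedge0 (x y : tvert) : bool :=
  match x, y with
  | inl (inl (inl _)), inl (inl (inr _)) => true
  | inl (inl (inl _)), inl (inr _) => true
  | inl (inr p), inr lf => tag lf == p
  | _, _ => false
  end.

Definition tree_adj : rel tvert := fun x y => tedge0 x y || tedge0 y x.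

End Tree.

(* Main.v *)
Require Import Defs.
From mathcomp Require Import all_boot.
From mathcomp Require Import zify.
From Stdlib Require Import Setoid Morphisms FunctionalExtensionality.
Set Implicit Arguments. Unset Strict Implicit. Unset Printing Implicit Defensive.

Section Basic.
Variables (V : eqType) (E : rel V).
Local Notation "u ~~ w" := (raag_eq E u w) (at level 70).

Lemma re_catl p u w : u ~~ w -> p ++ u ~~ p ++ w.
Proof.
elim=> {u w} [w|u w _ IH|u w z _ IH1 _ IH2|u w a b|u w a b c b0 Hab].
- exact: re_refl.
- exact: re_sym.
- exact: re_trans IH1 IH2.
- by rewrite !catA; apply: re_cancel.
- by rewrite !catA; apply: re_comm.
Qed.

Lemma re_catr z u w : u ~~ w -> u ++ z ~~ w ++ z.
Proof.
elim=> {u w} [w|u w _ IH|u w z' _ IH1 _ IH2|u w a b|u w a b c b0 Hab].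
- exact: re_refl.
- exact: re_sym.
- exact: re_trans IH1 IH2.
- by rewrite -!catA /=; apply: re_cancel.
- by rewrite -!catA /=; apply: re_comm.
Qed.

End Basic.

#[export] Instance re_equiv V E : Equivalence (@raag_eq V E).
Proof. split; [exact: re_refl| exact: re_sym | exact: re_trans]. Qed.

#[export] Instance re_cat_proper V E :
  Proper (@raag_eq V E ==> @raag_eq V E ==> @raag_eq V E) (@cat (V * bool)%type).
Proof.
move=> u u' Hu w w' Hw; apply: re_trans (re_catr _ Hu) _; exact: re_catl.
Qed.

#[export] Instance re_cons_proper V E :
  Proper (eq ==> @raag_eq V E ==> @raag_eq V E) (@cons (V * bool)%type).
Proof.
move=> a _ <- w w' Hw; exact: (re_catl [:: a] Hw).
Qed.

#[export] Hint Resolve re_refl : core.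

Section Basic2.
Variables (V : eqType) (E : rel V).
Local Notation "u ~~ w" := (raag_eq E u w) (at level 70).

Lemma winv_cat (u w : word V) : winv (u ++ w) = winv w ++ winv u.
Proof. by rewrite /winv map_cat rev_cat. Qed.

Lemma winv_cons a (w : word V) : winv (a :: w) = winv w ++ [:: (a.1, ~~ a.2)].
Proof. by rewrite /winv /= rev_cons cats1. Qed.

Lemma winvK (w : word V) : winv (winv w) = w.
Proof.
rewrite /winv map_rev revK -map_comp.
by elim: w => //= -[a b] w ->; rewrite negbK.
Qed.

Lemma winv_nil : winv (@nil (V * bool)) = [::]. Proof. by []. Qed.

Lemma re_canc1 x b (z : word V) : (x, b) :: (x, ~~ b) :: z ~~ z.
Proof. exact: (re_cancel E [::] z x b). Qed.

Lemma re_canc1' x b (z : word V) : (x, ~~ b) :: (x, b) :: z ~~ z.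
Proof. by have := re_canc1 x (~~ b) z; rewrite negbK. Qed.

Lemma re_cancR (w z : word V) : w ++ winv w ++ z ~~ z.
Proof.
elim: w z => [|[x b] w IH] z; first exact: re_refl.
rewrite winv_cons -catA cat_cons.
rewrite (IH ([:: (x, ~~ b)] ++ z)).
exact: re_canc1.
Qed.

Lemma re_cancL (w z : word V) : winv w ++ w ++ z ~~ z.
Proof. by have := re_cancR (winv w) z; rewrite winvK. Qed.

Lemma re_cancR0 (w : word V) : w ++ winv w ~~ [::].
Proof. by have := re_cancR w [::]; rewrite cats0. Qed.

Lemma re_cancL0 (w : word V) : winv w ++ w ~~ [::].
Proof. by have := re_cancL w [::]; rewrite cats0. Qed.

Lemma re_winv (u w : word V) : u ~~ w -> winv u ~~ winv w.
Proof.
move=> H.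
transitivity (winv u ++ w ++ winv w).
  by rewrite -{1}(cats0 (winv u)) (re_cancR0 w).
apply: re_trans (re_catl _ (re_catr _ (re_sym H))) _.
by rewrite catA re_cancL0.
Qed.

Lemma re_solve (u w z : word V) : u ++ w ~~ z -> w ~~ winv u ++ z.
Proof. by move=> H; rewrite -H re_cancL. Qed.

Lemma re_comm_letter (a : V * bool) (w : word V) :
  all (fun c => E a.1 c.1) w -> a :: w ~~ w ++ [:: a].
Proof.
case: a => x b; elim: w => [|[y c] w IH] //= /andP[Hxy Hw].
transitivity ((y, c) :: (x, b) :: w); first exact: (re_comm [::] w b c Hxy).
by rewrite (IH Hw).
Qed.

Lemma re_comm_words (u w : word V) :
  all (fun a => all (fun c => E a.1 c.1) w) u -> u ++ w ~~ w ++ u.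
Proof.
elim: u => [|a u IH] /=; first by rewrite cats0.
move=> /andP[Ha Hu].
rewrite (IH Hu) -cat_cons (re_comm_letter Ha) -catA.
by [].
Qed.

Lemma re_conj_comm (c u w : word V) : u ++ w ~~ w ++ u ->
  (c ++ u ++ winv c) ++ (c ++ w ++ winv c) ~~ (c ++ w ++ winv c) ++ (c ++ u ++ winv c).
Proof.
move=> H.
rewrite -!catA (re_cancL c (w ++ winv c)) (re_cancL c (u ++ winv c)).
rewrite !catA; apply: re_catr; rewrite -!catA; exact: re_catl.
Qed.

Lemma re_conj_triv (c u : word V) : c ++ u ~~ u ++ c -> winv c ++ u ++ c ~~ u.
Proof. by move=> H; rewrite -H re_cancL. Qed.

End Basic2.

Lemma re_conj_letter (V : eqType) (E : rel V) (a : V * bool) (c : word V) :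
  all (fun y => E a.1 y.1) c -> raag_eq E (c ++ a :: winv c) [:: a].
Proof.
move=> H.
have -> : c ++ a :: winv c = (c ++ [:: a]) ++ winv c by rewrite -catA.
rewrite -(re_comm_letter H) /=.
by rewrite (re_cancR0 E c).
Qed.

#[export] Instance re_winv_proper V E :
  Proper (@raag_eq V E ==> @raag_eq V E) (@winv V).
Proof. move=> u w H; exact: re_winv. Qed.

Section RelInd.
Variables (W : eqType) (E : rel W) (R : word W -> word W -> Prop).
Hypothesis Req : Equivalence R.
Hypothesis Rcat : Proper (R ==> R ==> R) (@cat (W * bool)%type).
Hypothesis Rcanc : forall y b, R [:: (y, b); (y, ~~ b)] [::].
Hypothesis Rcomm : forall x y, E x y -> R [:: (x, false); (y, false)] [:: (y, false); (x, false)].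

Lemma R_inv_l a b : R [:: a; b] [:: b; a] -> R [:: (a.1, ~~ a.2); b] [:: b; (a.1, ~~ a.2)].
Proof.
move=> H; case: a H => y c H /=.
have C1 : R [:: (y, c); (y, ~~ c)] [::] := Rcanc y c.
have C2 : R [:: (y, ~~ c); (y, c)] [::] by have := Rcanc y (~~ c); rewrite negbK.
transitivity ([:: (y, ~~ c)] ++ [:: b; (y, c)] ++ [:: (y, ~~ c)]).
  have -> : [:: (y, ~~ c); b] = [:: (y, ~~ c); b] ++ [::] by [].
  have -> : [:: (y, ~~ c)] ++ [:: b; (y, c)] ++ [:: (y, ~~ c)] =
            [:: (y, ~~ c); b] ++ [:: (y, c); (y, ~~ c)] by [].
  rewrite C1; reflexivity.
rewrite -H.
have -> : [:: (y, ~~ c)] ++ [:: (y, c); b] ++ [:: (y, ~~ c)] =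
          [:: (y, ~~ c); (y, c)] ++ [:: b; (y, ~~ c)] by [].
rewrite C2; reflexivity.
Qed.

Lemma R_inv_r a b : R [:: a; b] [:: b; a] -> R [:: a; (b.1, ~~ b.2)] [:: (b.1, ~~ b.2); a].
Proof. by move=> H; symmetry; apply: R_inv_l; symmetry. Qed.

Lemma R_of_re u w : raag_eq E u w -> R u w.
Proof.
elim=> {u w} [w|u w _ IH|u w z _ IH1 _ IH2|u w a b|u w a b c b0 Hab].
- reflexivity.
- by symmetry.
- by transitivity w.
- have -> : u ++ (a, b) :: (a, ~~ b) :: w = u ++ [:: (a, b); (a, ~~ b)] ++ w by [].
  rewrite Rcanc; reflexivity.
- have -> : u ++ (a, c) :: (b, b0) :: w = u ++ [:: (a, c); (b, b0)] ++ w by [].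
  have -> : u ++ (b, b0) :: (a, c) :: w = u ++ [:: (b, b0); (a, c)] ++ w by [].
  have H0 := Rcomm Hab.
  have H1 : R [:: (a, c); (b, false)] [:: (b, false); (a, c)].
    by case: c; [have := R_inv_l H0 | exact: H0].
  have H2 : R [:: (a, c); (b, b0)] [:: (b, b0); (a, c)].
    by case: b0; [have := R_inv_r H1 | exact: H1].
  rewrite H2; reflexivity.
Qed.

End RelInd.

Section Schreier.
Variables (V V' : eqType) (E : rel V) (E' : rel V').
Variables (m' : nat) (phi : V -> bool) (x : V).
Hypothesis phix : phi x.
Variables (G : nat -> V -> word V') (f : V' -> word V).
Local Notation m := m'.+1.

Definition step (s : nat) (a : V * bool) : nat :=
  if a.2 then (s + (m - phi a.1)) %% m else (s + phi a.1) %% m.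
Definition emit s (a : V * bool) : word V' :=
  if a.2 then winv (G (step s a) a.1) else G s a.1.
Fixpoint gw s (w : word V) : word V' :=
  if w is a :: w' then emit s a ++ gw (step s a) w' else [::].
Definition fin s (w : word V) := foldl step s w.
Definition cnt1 (a : V * bool) : nat := if a.2 then m - phi a.1 else phi a.1.
Definition cnt (w : word V) := sumn (map cnt1 w).
Definition tr s : word V := nseq s (x, false).
Definition fl (a : V' * bool) : word V := if a.2 then winv (f a.1) else f a.1.
Definition fw (w : word V') : word V := flatten (map fl w).

Lemma stepE s a : step s a = (s + cnt1 a) %% m.
Proof. by rewrite /step /cnt1; case: a.2. Qed.

Lemma step_lt s a : step s a < m.
Proof. by rewrite stepE ltn_pmod. Qed.

Lemma fin_lt s w : s < m -> fin s w < m.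
Proof. by elim: w s => [|a w IH] s //= _; apply: IH; apply: step_lt. Qed.

Lemma finE s w : s < m -> fin s w = (s + cnt w) %% m.
Proof.
move=> hs; elim: w s hs => [|a w IH] s hs /=; first by rewrite addn0 modn_small.
rewrite IH ?step_lt // stepE modnDml addnA //.
Qed.

Lemma gw_cat s u w : gw s (u ++ w) = gw s u ++ gw (fin s u) w.
Proof. by elim: u s => [|a u IH] s //=; rewrite IH catA. Qed.

Lemma fin_cat s u w : fin s (u ++ w) = fin (fin s u) w.
Proof. exact: foldl_cat. Qed.

Lemma cnt1K y b : cnt1 (y, b) + cnt1 (y, ~~ b) = m.
Proof. by rewrite /cnt1; case: b; case: (phi y) => /=; lia. Qed.

Lemma stepK s y b : s < m -> step (step s (y, b)) (y, ~~ b) = s.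
Proof.
move=> hs; rewrite !stepE modnDml -addnA cnt1K modnDr modn_small //.
Qed.

Definition Inv (u w : word V) :=
  forall s, s < m -> raag_eq E' (gw s u) (gw s w) /\ fin s u = fin s w.

Lemma Inv_equiv : Equivalence Inv.
Proof.
split.
- by move=> u s _; split.
- by move=> u w H s hs; have [H1 H2] := H s hs; split; [symmetry|].
- move=> u w z H1 H2 s hs; have [H11 H12] := H1 s hs; have [H21 H22] := H2 s hs.
  by split; [transitivity (gw s w) | rewrite H12].
Qed.

Lemma Inv_cat : Proper (Inv ==> Inv ==> Inv) (@cat (V * bool)%type).
Proof.
move=> u u' Hu w w' Hw s hs; have [H1 H2] := Hu s hs.
have [H3 H4] := Hw _ (fin_lt u hs).
rewrite !gw_cat !fin_cat -H2; split => //.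
by rewrite H1 H3.
Qed.

Lemma Inv_canc y b : Inv [:: (y, b); (y, ~~ b)] [::].
Proof.
move=> s hs; split; last by rewrite /fin /= stepK.
rewrite /=.
rewrite /emit /= cats0; case: b => /=.
  exact: re_cancL0.
have -> : step (step s (y, false)) (y, true) = s by have := stepK y false hs.
exact: re_cancR0.
Qed.

Hypothesis C1 : forall s a b, s < m -> E a b ->
  raag_eq E' (G s a ++ G ((s + phi a) %% m) b) (G s b ++ G ((s + phi b) %% m) a).

Lemma Inv_pcomm a b : E a b -> Inv [:: (a, false); (b, false)] [:: (b, false); (a, false)].
Proof.
move=> Hab s hs; split.
  rewrite /= /emit /= !cats0 /step /=.
  exact: C1 hs Hab.
rewrite !finE // /cnt /=; congr (_ %% _); lia.
Qed.

Lemma Inv_of_re u w : raag_eq E u w -> Inv u w.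
Proof.
apply: (R_of_re Inv_equiv Inv_cat Inv_canc) => a b; exact: Inv_pcomm.
Qed.

Lemma fin_winv s u : s < m -> fin (fin s u) (winv u) = s.
Proof.
move=> hs; rewrite -fin_cat.
by have [_ ->] := Inv_of_re (re_cancR0 E u) hs.
Qed.


Lemma fw_cat u w : fw (u ++ w) = fw u ++ fw w.
Proof. by rewrite /fw map_cat flatten_cat. Qed.

Lemma fw_winv u : fw (winv u) = winv (fw u).
Proof.
elim: u => [|[y b] u IH] //.
rewrite winv_cons fw_cat IH.
have -> : fw ((y, b) :: u) = fl (y, b) ++ fw u by [].
rewrite winv_cat; congr (_ ++ _).
rewrite /fw /= cats0 /fl /=; case: b => //=; by rewrite winvK.
Qed.

Hypothesis C2 : forall s a, s < m ->
  raag_eq E (fw (G s a)) (tr s ++ (a, false) :: winv (tr ((s + phi a) %% m))).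
Hypothesis C3 : forall a, raag_eq E' (gw 0 (f a)) [:: (a, false)] /\ fin 0 (f a) = 0.
Hypothesis C4 : forall a b, E' a b -> raag_eq E (f a ++ f b) (f b ++ f a).

Lemma fw_emit s a : s < m ->
  raag_eq E (fw (emit s a)) (tr s ++ a :: winv (tr (step s a))).
Proof.
move=> hs; case: a => y [|]; last exact: C2.
rewrite /emit /= fw_winv.
set p := step s (y, true).
have hp : p < m by apply: step_lt.
rewrite (re_winv (C2 y hp)).
have -> : (p + phi y) %% m = s by have := stepK y true hs.
rewrite winv_cat winv_cons winvK -catA //.
Qed.

Lemma fw_gw w s : s < m ->
  raag_eq E (fw (gw s w)) (tr s ++ w ++ winv (tr (fin s w))).
Proof.
elim: w s => [|a w IH] s hs.
  by rewrite /= re_cancR0.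
have -> : fin s (a :: w) = fin (step s a) w by [].
have -> : gw s (a :: w) = emit s a ++ gw (step s a) w by [].
rewrite fw_cat (fw_emit a hs) (IH _ (step_lt _ _)) -catA cat_cons re_cancL //.
Qed.

Lemma gw_fl b : raag_eq E' (gw 0 (fl b)) [:: b] /\ fin 0 (fl b) = 0.
Proof.
case: b => y [|]; last exact: C3.
have [C31 C32] := C3 y.
rewrite /fl /=; split; last by rewrite -{1}C32 fin_winv.
have [I _] := Inv_of_re (re_cancR0 E (f y)) (ltn0Sn m').
move: I; rewrite gw_cat C32 /= => /re_solve ->.
by rewrite cats0 (re_winv C31).
Qed.

Lemma gw_fw a : raag_eq E' (gw 0 (fw a)) a /\ fin 0 (fw a) = 0.
Proof.
elim: a => [|b a [IH1 IH2]] //.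
have -> : fw (b :: a) = fl b ++ fw a by [].
have [F1 F2] := gw_fl b.
by rewrite gw_cat fin_cat F2 IH2 F1 IH1.
Qed.

Lemma cnt_cat u w : cnt (u ++ w) = cnt u + cnt w.
Proof. by rewrite /cnt map_cat sumn_cat. Qed.

Lemma cnt_nseq n a : cnt (nseq n a) = n * cnt1 a.
Proof. by elim: n => //= n IH; rewrite /cnt /= -/(cnt _) IH mulSn. Qed.

Lemma nseq_rcons T n (a : T) : nseq n a ++ [:: a] = a :: nseq n a.
Proof. by elim: n => //= n ->. Qed.

Lemma winv_tr s : winv (tr s) = nseq s (x, true).
Proof.
elim: s => // s IH; rewrite /tr /= winv_cons -/(tr s) IH /=.
exact: nseq_rcons.
Qed.

Theorem schreier_main :
  exists H, [/\ is_subgroup E H, finite_index E H & iso_to_subgroup E' E H].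
Proof.
exists (fun w => fin 0 w = 0); split.
- split.
  + by move=> u w Huw Hu; have [_ <-] := Inv_of_re Huw (ltn0Sn m').
  + by [].
  + by move=> u w Hu Hw; rewrite fin_cat Hu.
  + by move=> u Hu; rewrite -{1}Hu fin_winv.
- exists [seq tr s | s <- iota 0 m] => w.
  exists (tr (fin 0 w)); split.
    by apply: map_f; rewrite mem_iota add0n fin_lt.
  exists (winv (tr (fin 0 w)) ++ w); split; last by rewrite re_cancR.
  rewrite finE // cnt_cat winv_tr cnt_nseq.
  have hw := finE w (ltn0Sn m'); rewrite add0n in hw.
  rewrite add0n -modnDmr -hw /cnt1 /= phix addnC -mulnS.
  by rewrite subn1 /= modnMl.
- exists fw; split.
  + apply: (R_of_re (R := fun u w => raag_eq E (fw u) (fw w))).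
    * split.
      -- by move=> u.
      -- by move=> u w H; symmetry.
      -- by move=> u w z H1 H2; transitivity (fw w).
    * by move=> u u' Hu w w' Hw; rewrite !fw_cat Hu Hw.
    * move=> y [|]; rewrite /fw /= cats0 /fl /=; [exact: re_cancL0 | exact: re_cancR0].
    * by move=> a b Hab; rewrite /fw /= !cats0 /fl /=; apply: C4.
  + by move=> a b; rewrite fw_cat.
  + move=> a b H.
    have [g1 _] := gw_fw a; have [g2 _] := gw_fw b.
    have [I _] := Inv_of_re H (ltn0Sn m').
    by rewrite -g1 I g2.
  + by move=> a; have [_ ->] := gw_fw a.
  + move=> w Hw; exists (gw 0 w).
    by rewrite (fw_gw w (ltn0Sn m')) Hw /= cats0.
Qed.

End Schreier.

Lemma base_iso (V : eqType) (E : rel V) :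
  exists H, [/\ is_subgroup E H, finite_index E H & iso_to_subgroup E E H].
Proof.
exists (fun _ => True); split.
- by split.
- by exists [:: [::]] => w; exists [::]; split; [rewrite inE | exists w].
- exists id; split => //.
  by move=> w _; exists w.
Qed.

Section Compose.
Variables (V0 V1 V2 : eqType) (E0 : rel V0) (E1 : rel V1) (E2 : rel V2).
Variables (H1 : word V0 -> Prop) (H2 : word V1 -> Prop).

Lemma compose_iso :
  is_subgroup E0 H1 -> finite_index E0 H1 -> iso_to_subgroup E1 E0 H1 ->
  is_subgroup E1 H2 -> finite_index E1 H2 -> iso_to_subgroup E2 E1 H2 ->
  exists H, [/\ is_subgroup E0 H, finite_index E0 H & iso_to_subgroup E2 E0 H].
Proof.
move=> _ [reps1 Hr1] [f1 [f1r f1h f1i f1H f1s]].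
move=> [S2sat S2nil S2cat S2inv] [reps2 Hr2] [f2 [f2r f2h f2i f2H f2s]].
have f1nil : raag_eq E0 (f1 [::]) [::].
  have := f1h [::] [::]; rewrite cat0s => /re_sym /re_solve ->.
  exact: re_cancL0.
have f1inv a : raag_eq E0 (f1 (winv a)) (winv (f1 a)).
  have e1 : raag_eq E0 (f1 a ++ f1 (winv a)) [::].
    by rewrite -f1h (f1r _ _ (re_cancR0 E1 a)) f1nil.
  by move/re_solve: e1; rewrite cats0.
exists (fun w => exists a, H2 a /\ raag_eq E0 (f1 a) w); split.
- split.
  + by move=> u w Huw [a [Ha Hau]]; exists a; split => //; rewrite Hau.
  + by exists [::]; split.
  + move=> u w [a [Ha Hau]] [b [Hb Hbw]]; exists (a ++ b); split; first exact: S2cat.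
    by rewrite f1h Hau Hbw.
  + move=> u [a [Ha Hau]]; exists (winv a); split; first exact: S2inv.
    by rewrite f1inv (re_winv Hau).
- exists [seq r1 ++ f1 r2 | r1 <- reps1, r2 <- reps2] => w.
  have [r1 [r1in [h1 [Hh1 wE]]]] := Hr1 w.
  have [a1 a1E] := f1s h1 Hh1.
  have [r2 [r2in [h2 [Hh2 a1E']]]] := Hr2 a1.
  exists (r1 ++ f1 r2); split; first exact: allpairs_f.
  exists (f1 h2); split; first by exists h2.
  by rewrite wE -a1E (f1r _ _ a1E') f1h catA.
- exists (fun a => f1 (f2 a)); split.
  + by move=> a b Hab; apply: f1r; apply: f2r.
  + by move=> a b; rewrite (f1r _ _ (f2h a b)) f1h.
  + by move=> a b Hab; apply: f2i; apply: f1i.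
  + by move=> a; exists (f2 a); split.
  + move=> w [a [Ha Haw]]; have [b Hb] := f2s a Ha.
    by exists b; rewrite (f1r _ _ Hb).
Qed.
End Compose.

Definition cenv {l} {d k : 'I_l -> nat} {q} : tvert d k q := inl (inl (inl tt)).
Definition hairv {l} {d k : 'I_l -> nat} {q} (h : 'I_q) : tvert d k q := inl (inl (inr h)).
Definition pivv {l} {d k : 'I_l -> nat} {q} (P : pivT k) : tvert d k q := inl (inr P).
Definition leafv {l} {d k : 'I_l -> nat} {q} (L : leafT d k) : tvert d k q := inr L.

Section Inst.
Variables (l : nat) (d K K' : 'I_l -> nat) (Q Q' : nat).
Local Notation S := (tvert d K Q).
Local Notation T := (tvert d K' Q').
Local Notation ES := (@tree_adj l d K Q).
Local Notation ET := (@tree_adj l d K' Q').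
Variables (m' : nat) (x : pivT K) (one : pivT K -> bool).
Hypothesis onex : one x.
Local Notation m := m'.+1.
Variables (encZ : forall P : pivT K, nat -> 'I_(K' (tag P)))
          (encY : forall P : pivT K, 'I_(K' (tag P)))
          (dec : forall j, 'I_(K' j) -> 'I_(K j) * nat).
Variables (encH : 'I_Q -> nat -> 'I_Q') (encE : pivT K -> nat -> option 'I_Q')
          (dech : 'I_Q' -> ('I_Q * nat) + (pivT K * nat)).

Definition mkP j (a : 'I_(K j)) : pivT K := existT (fun i => 'I_(K i)) j a.
Arguments mkP : simpl never.

Hypothesis decP : forall j (t : 'I_(K' j)), let c := dec t in
  if one (mkP c.1) then c.2 = 0 /\ encY (mkP c.1) = t
  else c.2 < m /\ encZ (mkP c.1) c.2 = t.
Hypothesis decZ : forall P s, ~~ one P -> s < m -> dec (encZ P s) = (tagged P, s).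
Hypothesis decY : forall P, one P -> dec (encY P) = (tagged P, 0).
Hypothesis dechP : forall q, match dech q with
  | inl (h, s) => s < m /\ encH h s = q
  | inr (P, s) => [/\ one P, P != x, s < m' & encE P s = Some q] end.
Hypothesis decH : forall h s, s < m -> dech (encH h s) = inl (h, s).
Hypothesis encE_none : forall P s, ~~ [&& one P, P != x & s < m'] -> encE P s = None.
Hypothesis encE_some : forall P s q, encE P s = Some q -> dech q = inr (P, s).
Hypothesis encE_ex : forall P s, one P -> P != x -> s < m' -> encE P s != None.

Definition phiS (v : S) : bool := if v is inl (inr P) then one P else false.
Definition xS : S := pivv x.
Definition tS s : word S := tr xS s.
Definition conjS s (w : word S) : word S := tS s ++ w ++ winv (tS s).

Definition eh P s : word T := if encE P s is Some q then [:: (hairv q, false)] else [::].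
Definition WW P n : word T := flatten [seq eh P i | i <- iota 0 n].
Definition pY (P : pivT K) : pivT K' := existT (fun i => 'I_(K' i)) (tag P) (encY P).
Definition pZ (P : pivT K) s : pivT K' := existT (fun i => 'I_(K' i)) (tag P) (encZ P s).

Definition GG (s : nat) (v : S) : word T :=
  match v with
  | inl (inl (inl _)) => [:: (cenv, false)]
  | inl (inl (inr h)) => [:: (hairv (encH h s), false)]
  | inl (inr P) => if one P then
                     (if s < m' then eh P s else winv (WW P m') ++ [:: (pivv (pY P), false)])
                   else [:: (pivv (pZ P s), false)]
  | inr L => if one (tag L) then
               winv (WW (tag L) s) ++
                 (leafv (existT (fun p : pivT K' => 'I_(d (tag p))) (pY (tag L)) (tagged L)), false)
                 :: WW (tag L) s
             else [:: (leafv (existT (fun p : pivT K' => 'I_(d (tag p))) (pZ (tag L) s) (tagged L)), false)]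
  end.

Definition ff (a : T) : word S :=
  match a with
  | inl (inl (inl _)) => [:: (cenv, false)]
  | inl (inl (inr q)) => match dech q with
                         | inl (h, s) => conjS s [:: (hairv h, false)]
                         | inr (P, s) => tS s ++ (pivv P, false) :: winv (tS s.+1)
                         end
  | inl (inr p) => let c := dec (tagged p) in
                   if one (mkP c.1) then nseq m (pivv (mkP c.1), false)
                   else conjS c.2 [:: (pivv (mkP c.1), false)]
  | inr L => let c := dec (tagged (tag L)) in
             conjS c.2 [:: (leafv (existT (fun p : pivT K => 'I_(d (tag p))) (mkP c.1) (tagged L)), false)]
  end.


Local Notation gwS := (gw m' phiS GG).
Local Notation finS := (fin m' phiS).
Local Notation fwS := (fw ff).

Lemma all_fst_winv (V : eqType) (p : pred V) (w : word V) :
  all (fun c => p c.1) (winv w) = all (fun c => p c.1) w.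
Proof. by rewrite /winv all_rev all_map. Qed.

Lemma allWW (p : pred T) P n : (forall q, p (hairv q)) -> all (fun c => p c.1) (WW P n).
Proof.
move=> hp; rewrite /WW; elim: (iota 0 n) => //= i r IH.
by rewrite all_cat IH andbT /eh; case: encE => //= q; rewrite hp.
Qed.

Lemma allcen s P : all (fun c => ET cenv c.1) (GG s (pivv P)).
Proof.
rewrite /GG /pivv; case: (one P); last by [].
case: ifP => _; first by rewrite /eh; case: encE.
by rewrite all_cat all_fst_winv allWW.
Qed.

Lemma WWS P n : WW P n.+1 = WW P n ++ eh P n.
Proof. by rewrite /WW -addn1 iotaD map_cat flatten_cat /= cats0. Qed.

Lemma C1_0 s a b : s < m -> tedge0 a b ->
  raag_eq ET (GG s a ++ GG ((s + phiS a) %% m) b) (GG s b ++ GG ((s + phiS b) %% m) a).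
Proof.
move=> hs; case: a => [[[[]|h]|P]|L]; case: b => [[[[]|h']|P']|L'] // H.
- rewrite /= addn0 modn_small //.
  exact: (@re_comm _ _ [::] [::]).
- rewrite [phiS _]/= addn0 modn_small //.
  apply: re_comm_letter; exact: allcen.
- move: H => /= /eqP H; subst P; case: L' => P r.
  rewrite /GG /phiS /=; case oP: (one P).
  + case: (ltnP s m') => hsm.
    * rewrite addn1 modn_small //= addn0 (modn_small hs) hsm WWS winv_cat -!catA re_cancR catA.
      by rewrite -catA.
    * have -> : s = m' by apply/eqP; rewrite eqn_leq hsm -ltnS hs.
      rewrite addn1 modnn /= addn0 modn_small // ltnn.
      have -> : WW P 0 = [::] by [].
      rewrite -!catA cat_cons; apply: re_catl.
      transitivity [:: (@leafv _ _ _ Q' (existT (fun p : pivT K' => 'I_(d (tag p))) (pY P) r), false);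
                       (pivv (pY P), false)].
        by apply: (@re_comm _ _ [::] [::]); rewrite /tree_adj /= eqxx.
      apply: (re_catl [:: _]); symmetry; exact: re_cancR.
  + rewrite addn0 modn_small //.
    by apply: (@re_comm _ _ [::] [::]); rewrite /tree_adj /= eqxx.
Qed.

Lemma C1' s a b : s < m -> ES a b ->
  raag_eq ET (GG s a ++ GG ((s + phiS a) %% m) b) (GG s b ++ GG ((s + phiS b) %% m) a).
Proof. by move=> hs /orP[] H; [exact: C1_0 | symmetry; exact: C1_0]. Qed.

Lemma tS_rcons n : tS n ++ [:: (xS, false)] = tS n.+1.
Proof. exact: nseq_rcons. Qed.

Lemma fw1 (a : T) : fwS [:: (a, false)] = ff a.
Proof. by rewrite /fw /= cats0. Qed.

Lemma fw_cons1 (a : T) w : fwS ((a, false) :: w) = ff a ++ fwS w.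
Proof. by []. Qed.

Lemma fweh P s : one P -> s < m' ->
  raag_eq ES (fwS (eh P s)) (tS s ++ (pivv P, false) :: winv (tS s.+1)).
Proof.
move=> oP hs; case: (eqVneq P x) => [->|nPx].
  rewrite /eh encE_none ?eqxx ?andbF //.
  rewrite -cat1s catA tS_rcons re_cancR0 //.
have := encE_ex oP nPx hs; rewrite /eh.
case E1: (encE P s) => [q|] // _.
by rewrite fw1 /ff /hairv (encE_some E1).
Qed.

Lemma fwWW P n : one P -> n <= m' ->
  raag_eq ES (fwS (WW P n)) (nseq n (pivv P, false) ++ winv (tS n)).
Proof.
move=> oP; elim: n => [|n IH] hn; first by [].
rewrite WWS fw_cat IH ?(ltnW hn) // fweh // -!catA re_cancL.
by rewrite -cat1s catA nseq_rcons.
Qed.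

Lemma mkP_eta (P : pivT K) : mkP (tagged P) = P.
Proof. by case: P. Qed.

Lemma ffY P : one P -> ff (pivv (pY P)) = nseq m (pivv P, false).
Proof. by move=> oP; rewrite /ff /= decY //= mkP_eta oP. Qed.

Lemma ffZ P s : ~~ one P -> s < m -> ff (pivv (pZ P s)) = conjS s [:: (pivv P, false)].
Proof. by move=> oP hs; rewrite /ff /= decZ //= mkP_eta (negbTE oP). Qed.

Lemma ffH h s : s < m -> ff (hairv (encH h s)) = conjS s [:: (hairv h, false)].
Proof. by move=> hs; rewrite /ff /= decH. Qed.

Lemma ffLY (L : leafT d K) : one (tag L) ->
  ff (leafv (existT (fun p : pivT K' => 'I_(d (tag p))) (pY (tag L)) (tagged L))) =
  [:: (leafv L, false)].
Proof. by case: L => [[j a] r] oP; rewrite /ff /=; move: (decY oP) => /= ->. Qed.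

Lemma ffLZ (L : leafT d K) s : ~~ one (tag L) -> s < m ->
  ff (leafv (existT (fun p : pivT K' => 'I_(d (tag p))) (pZ (tag L) s) (tagged L))) =
  conjS s [:: (leafv L, false)].
Proof. by case: L => [[j a] r] oP hs; rewrite /ff /=; move: (decZ oP hs) => /= ->. Qed.

Lemma C2' s a : s < m ->
  raag_eq ES (fwS (GG s a)) (tr xS s ++ (a, false) :: winv (tr xS ((s + phiS a) %% m))).
Proof.
move=> hs; case: a => [[[[]|h]|P]|L].
- rewrite [phiS _]/= addn0 modn_small // fw1 /=; symmetry.
  by apply: re_conj_letter; rewrite /tr all_nseq orbT.
- by rewrite [phiS _]/= addn0 modn_small // fw1 ffH.
- rewrite [phiS _]/=; case oP: (one P); rewrite /GG /= oP.
  + case: (ltnP s m') => hsm.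
      by rewrite fweh // addn1 modn_small.
    have -> : s = m' by apply/eqP; rewrite eqn_leq hsm -ltnS hs.
    rewrite addn1 modnn fw_cat fw_winv fw1 ffY // (re_winv (fwWW oP (leqnn m'))).
    rewrite winv_cat winvK -catA.
    have -> : nseq m ((pivv P : S), false) = nseq m' ((pivv P : S), false) ++ [:: ((pivv P : S), false)].
      by rewrite nseq_rcons.
    by rewrite re_cancL.
  + by rewrite addn0 modn_small // fw1 ffZ ?oP.
- rewrite [phiS _]/= addn0 modn_small //; rewrite /GG.
  case oP: (one (tag L)).
  + move: oP; case: L => P r oP.
    rewrite fw_cat fw_winv fw_cons1.
    rewrite (@ffLY (existT _ P r) oP).
    have hs' : s <= m' by [].
    rewrite (re_winv (fwWW oP hs')) (fwWW oP hs') winv_cat winvK -!catA.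
    apply: re_catl; rewrite -cat1s catA.
    have HC : raag_eq ES (winv (nseq s ((pivv P : S), false)) ++
                (leafv (existT (fun p : pivT K => 'I_(d (tag p))) P r) : S, false) ::
                winv (winv (nseq s ((pivv P : S), false))))
              [:: (leafv (existT (fun p : pivT K => 'I_(d (tag p))) P r) : S, false)].
      apply: re_conj_letter; rewrite all_fst_winv all_nseq.
      by rewrite /tree_adj /= eqxx orbT.
    rewrite !cats0 -!catA.
    move: HC; rewrite winvK -cat1s catA => HC.
    rewrite !catA; apply: (@re_catr _ _ (winv (tS s)) _ [:: _]); rewrite -catA; exact: HC.
  + by rewrite fw1 ffLZ ?oP.
Qed.


Lemma gw_cons s a w : gwS s (a :: w) = emit m' phiS GG s a ++ gwS (step m' phiS s a) w.
Proof. by []. Qed.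
Lemma fin_cons s a w : finS s (a :: w) = finS (step m' phiS s a) w.
Proof. by []. Qed.

Lemma emitF s a : emit m' phiS GG s (a, false) = GG s a.
Proof. by []. Qed.
Lemma emitT s a : emit m' phiS GG s (a, true) = winv (GG (step m' phiS s (a, true)) a).
Proof. by []. Qed.

Lemma GGx s : s < m' -> GG s xS = [::].
Proof. by move=> hs; rewrite /GG /xS /pivv onex hs /eh encE_none // eqxx andbF. Qed.

Lemma runX n s : s + n <= m' -> gwS s (tS n) = [::] /\ finS s (tS n) = s + n.
Proof.
elim: n s => [|n IH] s hn; first by rewrite addn0.
have hs : s < m' by lia.
have -> : tS n.+1 = (xS, false) :: tS n by [].
rewrite gw_cons fin_cons emitF GGx // /step /= onex addn1 modn_small; last by lia.
have [-> ->] := IH s.+1 ltac:(lia); split => //; lia.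
Qed.

Lemma runXi n s : n <= s -> s <= m' -> gwS s (winv (tS n)) = [::] /\ finS s (winv (tS n)) = s - n.
Proof.
rewrite /tS winv_tr.
elim: n s => [|n IH] s h1 h2; first by rewrite subn0.
have e : step m' phiS s (xS, true) = s.-1.
  rewrite /step /= onex subn1 /=.
  have -> : s + m' = s.-1 + m by lia.
  by rewrite modnDr modn_small //; lia.
have -> : nseq n.+1 (xS, true) = (xS, true) :: nseq n (xS, true) by [].
rewrite gw_cons fin_cons emitT e GGx; last by lia.
have [-> ->] := IH s.-1 ltac:(lia) ltac:(lia); split => //; lia.
Qed.

Lemma runConj s w : s <= m' -> finS s w = s ->
  gwS 0 (conjS s w) = gwS s w /\ finS 0 (conjS s w) = 0.
Proof.
move=> hs hw; rewrite /conjS !gw_cat !fin_cat.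
have [-> ->] := @runX s 0 hs; rewrite add0n hw.
by have [-> ->] := runXi (leqnn s) hs; rewrite cats0 subnn.
Qed.

Lemma runP P n s : one P -> s + n <= m' ->
  gwS s (nseq n (pivv P, false)) = flatten [seq eh P i | i <- iota s n] /\
  finS s (nseq n (pivv P, false)) = s + n.
Proof.
move=> oP; elim: n s => [|n IH] s hn; first by rewrite addn0.
have hs : s < m' by lia.
have -> : nseq n.+1 ((pivv P : S), false) = (pivv P, false) :: nseq n (pivv P, false) by [].
rewrite gw_cons fin_cons emitF /GG /pivv oP hs /step /= oP addn1 modn_small; last by lia.
have [-> ->] := IH s.+1 ltac:(lia); split => //; lia.
Qed.


Lemma gw1 s (a : S) : gwS s [:: (a, false)] = GG s a.
Proof. by rewrite gw_cons emitF /= cats0. Qed.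
Lemma fin1 s (a : S) : finS s [:: (a, false)] = (s + phiS a) %% m.
Proof. by []. Qed.

Lemma pY_eq (p : pivT K') (a : 'I_(K (tag p))) : encY (mkP a) = tagged p -> pY (mkP a) = p.
Proof. by case: p a => j t a /= H; rewrite /pY /= H. Qed.
Lemma pZ_eq (p : pivT K') (a : 'I_(K (tag p))) s : encZ (mkP a) s = tagged p -> pZ (mkP a) s = p.
Proof. by case: p a => j t a /= H; rewrite /pZ /= H. Qed.
Lemma pYL_eq (L : leafT d K') (a : 'I_(K (tag (tag L)))) :
  encY (mkP a) = tagged (tag L) ->
  (existT (fun p : pivT K' => 'I_(d (tag p))) (pY (mkP a)) (tagged L)) = L.
Proof. by case: L a => [[j t] r] a /= H; rewrite /pY /= H. Qed.
Lemma pZL_eq (L : leafT d K') (a : 'I_(K (tag (tag L)))) s :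
  encZ (mkP a) s = tagged (tag L) ->
  (existT (fun p : pivT K' => 'I_(d (tag p))) (pZ (mkP a) s) (tagged L)) = L.
Proof. by case: L a => [[j t] r] a /= H; rewrite /pZ /= H. Qed.

Lemma L1 P : one P ->
  raag_eq ET (gwS 0 (nseq m (pivv P, false))) [:: (pivv (pY P), false)] /\
  finS 0 (nseq m (pivv P, false)) = 0.
Proof.
move=> oP.
have -> : nseq m ((pivv P : S), false) =
          nseq m' (pivv P, false) ++ [:: (pivv P, false)] by rewrite nseq_rcons.
rewrite gw_cat fin_cat.
have [-> ->] := @runP P m' 0 oP ltac:(lia); rewrite add0n gw1 fin1 [phiS _]/= oP addn1 modnn.
split => //.
by rewrite [GG _ _]/= oP ltnn catA -/(WW P m') re_cancR0.
Qed.

Lemma L2 P s : ~~ one P -> s < m ->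
  gwS 0 (conjS s [:: (pivv P, false)]) = [:: (pivv (pZ P s), false)] /\
  finS 0 (conjS s [:: (pivv P, false)]) = 0.
Proof.
move=> oP hs; have hs' : s <= m' by [].
have [-> ->] := runConj (w := [:: (pivv P, false)]) hs'
  ltac:(by rewrite fin1 /= (negbTE oP) addn0 modn_small).
by rewrite gw1 /GG /pivv (negbTE oP).
Qed.

Lemma L3 (L0 : leafT d K) : one (tag L0) ->
  gwS 0 (conjS 0 [:: (leafv L0, false)]) =
    [:: (leafv (existT (fun p : pivT K' => 'I_(d (tag p))) (pY (tag L0)) (tagged L0)), false)] /\
  finS 0 (conjS 0 [:: (leafv L0, false)]) = 0.
Proof.
move=> oP.
have [-> ->] := runConj (s := 0) (w := [:: (leafv L0, false)]) (leq0n _)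
  ltac:(by rewrite fin1 /= mod0n).
by rewrite gw1 /GG /leafv oP.
Qed.

Lemma L4 (L0 : leafT d K) s : ~~ one (tag L0) -> s < m ->
  gwS 0 (conjS s [:: (leafv L0, false)]) =
    [:: (leafv (existT (fun p : pivT K' => 'I_(d (tag p))) (pZ (tag L0) s) (tagged L0)), false)] /\
  finS 0 (conjS s [:: (leafv L0, false)]) = 0.
Proof.
move=> oP hs; have hs' : s <= m' by [].
have [-> ->] := runConj (w := [:: (leafv L0, false)]) hs'
  ltac:(by rewrite fin1 /= addn0 modn_small).
by rewrite gw1 /GG /leafv (negbTE oP).
Qed.

Lemma C3' (a : T) : raag_eq ET (gwS 0 (ff a)) [:: (a, false)] /\ finS 0 (ff a) = 0.
Proof.
case: a => [[[[]|q]|p]|L].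
- by rewrite /ff gw1 fin1 /= mod0n.
- rewrite /ff /hairv; case: (dech q) (dechP q) => [[h s] [hs <-]|[P s] [oP nPx hs Ee]].
  + have [-> ->] := runConj (w := [:: (hairv h, false)]) hs ltac:(by rewrite fin1 addn0 modn_small).
    by rewrite gw1.
  + rewrite !gw_cat !fin_cat.
    have [-> ->] := @runX s 0 ltac:(lia); rewrite add0n.
    rewrite gw_cons fin_cons emitF /step /= oP addn1 modn_small; last by lia.
    have [-> ->] := runXi (leqnn s.+1) hs; rewrite subnn; split => //.
    by rewrite /GG /pivv ?oP /= hs /eh Ee /= ?cats0.
- rewrite /ff /=; have := decP (tagged p); case: (dec (tagged p)) => a s /=.
  case: ifP => oP [Hs Ht]; rewrite ?oP.
  + have [-> ->] := L1 oP; split => //.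
    by rewrite (pY_eq Ht).
  + have [-> ->] := L2 (negbT oP) Hs; split => //.
    by rewrite (pZ_eq Ht).
- rewrite /ff /=; have := decP (tagged (tag L)); case: (dec (tagged (tag L))) => a s /=.
  case: ifP => oP [Hs Ht].
  + subst s; match goal with |- context [conjS 0 [:: (leafv ?L0, false)]] =>
      have [-> ->] := L3 (L0 := L0) oP end; split => //.
    by rewrite (pYL_eq Ht).
  + match goal with |- context [conjS s [:: (leafv ?L0, false)]] =>
      have [-> ->] := L4 (L0 := L0) (negbT oP) Hs end; split => //.
    by rewrite (pZL_eq Ht).
Qed.


Lemma cen_comm (w : word S) : all (fun c => ES cenv c.1) w ->
  raag_eq ES ([:: (cenv, false)] ++ w) (w ++ [:: (cenv, false)]).
Proof. by move=> H; apply: re_comm_words; rewrite /= H. Qed.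

Lemma all_cen_tS n : all (fun c => ES cenv c.1) (tS n).
Proof. by rewrite /tS /tr all_nseq orbT. Qed.

Lemma all_cen_wtS n : all (fun c => ES cenv c.1) (winv (tS n)).
Proof. by rewrite /tS winv_tr all_nseq orbT. Qed.

Lemma all_cen_conj s (w : word S) : all (fun c => ES cenv c.1) w ->
  all (fun c => ES cenv c.1) (conjS s w).
Proof. by move=> H; rewrite /conjS !all_cat all_cen_tS H (all_cen_wtS s). Qed.

Lemma all_cen_hair q : all (fun c => ES cenv c.1) (ff (hairv q)).
Proof.
rewrite /ff /hairv; case: (dech q) => [[h s]|[P s]]; first exact: all_cen_conj.
by rewrite all_cat all_cen_tS /= (all_cen_wtS s.+1).
Qed.

Lemma all_cen_piv p : all (fun c => ES cenv c.1) (ff (pivv p)).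
Proof.
rewrite /ff /pivv; case: ifP => _; first by rewrite all_nseq orbT.
exact: all_cen_conj.
Qed.

Lemma conjS0 w : conjS 0 w = w.
Proof. by rewrite /conjS /tS /tr /= winv_nil cats0. Qed.

Lemma C4_0 (a b : T) : tedge0 a b -> raag_eq ES (ff a ++ ff b) (ff b ++ ff a).
Proof.
case: a => [[[[]|q]|p]|L]; case: b => [[[[]|q']|p']|L'] // H.
- exact: (cen_comm (all_cen_hair q')).
- exact: (cen_comm (all_cen_piv p')).
- move: H => /= /eqP H; subst p.
  rewrite /ff /=; have := decP (tagged (tag L')); case: (dec (tagged (tag L'))) => a s /=.
  case: ifP => oP [Hs _].
  + subst s; rewrite conjS0.
    apply: re_comm_words; rewrite /= andbT all_nseq.
    by rewrite /tree_adj /= eqxx orbT.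
  + apply: re_conj_comm; apply: (@re_comm _ _ [::] [::]).
    by rewrite /tree_adj /= eqxx.
Qed.

Lemma C4' (a b : T) : ET a b -> raag_eq ES (ff a ++ ff b) (ff b ++ ff a).
Proof. by move=> /orP[] H; [exact: C4_0 | symmetry; exact: C4_0]. Qed.

Theorem inst_main :
  exists H, [/\ is_subgroup ES H, finite_index ES H & iso_to_subgroup ET ES H].
Proof.
exact: (@schreier_main _ _ ES ET m' phiS xS onex GG ff C1' C2' C3' C4').
Qed.

End Inst.

Section Part2.
Variables (d m' : nat).
Local Notation K := (fun _ : 'I_1 => 2).
Local Notation K' := (fun _ : 'I_1 => m'.+2).
Local Notation dd := (fun _ : 'I_1 => d).

Definition x2 : pivT K := existT (fun i => 'I_(K i)) ord0 (ord0 : 'I_2).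
Definition one2 (P : pivT K) : bool := val (tagged P) == 0.
Definition encZ2 (P : pivT K) (s : nat) : 'I_(K' (tag P)) := inord s.+1.
Definition encY2 (P : pivT K) : 'I_(K' (tag P)) := ord0.
Definition dec2 (j : 'I_1) (t : 'I_(K' j)) : 'I_(K j) * nat :=
  if val t == 0 then (ord0, 0) else (ord_max, (val t).-1).
Definition encH2 (h : 'I_0) (s : nat) : 'I_0 := h.
Definition encE2 (P : pivT K) (s : nat) : option 'I_0 := None.
Definition dech2 (q : 'I_0) : ('I_0 * nat) + (pivT K * nat) := inl (q, 0).

Lemma part2_main :
  exists H : word (tvert dd K 0) -> Prop,
    [/\ is_subgroup (tree_adj (l:=1) (d:=dd) (k:=K) (q:=0)) H,
        finite_index (tree_adj (l:=1) (d:=dd) (k:=K) (q:=0)) H &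
        iso_to_subgroup (tree_adj (l:=1) (d:=dd) (k:=K') (q:=0))
                        (tree_adj (l:=1) (d:=dd) (k:=K) (q:=0)) H].
Proof.
apply: (@inst_main 1 dd K K' 0 0 m' x2 one2 _ encZ2 encY2 dec2 encH2 encE2 dech2).
- by [].
- move=> j t /=; rewrite /dec2; case: eqP => [t0|tn0] /=.
    by split => //; apply: val_inj; rewrite /= t0.
  split; first by have := ltn_ord t; lia.
  apply: val_inj; rewrite /encZ2 /= inordK; last by have := ltn_ord t; lia.
  by rewrite prednK // lt0n; apply/eqP.
- move=> [j a] s /=; rewrite /one2 /= => ha hs.
  have hv : \val (inord s.+1 : 'I_m'.+2) = s.+1 by apply: inordK.
  rewrite /dec2 /encZ2 hv /=; congr (_, _).
  by apply: val_inj => /=; have := ltn_ord a; lia.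
- move=> [j a] /=; rewrite /one2 /= => /eqP ha.
  by rewrite /dec2 /encY2 /=; congr (_, _); apply: val_inj.
- by case.
- by case.
- by [].
- by [].
- move=> [j a] s; rewrite /one2 /= => /eqP ha.
  have -> : j = ord0 by apply: val_inj => /=; have := ltn_ord j; lia.
  have -> : a = ord0 by apply: val_inj.
  by rewrite eqxx.
Qed.
End Part2.

Section Step.
Variables (l : nat) (d K : 'I_l -> nat) (Q : nat) (i0 j0 : 'I_l) (m' : nat).
Hypothesis hij : i0 != j0.
Hypothesis hK : 0 < K j0.

Definition CopT j : finType := ('I_(K j) * 'I_(if j == i0 then m' else 0).+1)%type.
Definition Kc j := #|CopT j|.
Definition xs : pivT K := existT (fun i => 'I_(K i)) j0 (Ordinal hK).
Definition ones (P : pivT K) : bool := tag P != i0.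
Definition OnePiv : finType := {P : pivT K | (tag P != i0) && (P != xs)}.
Definition HairT : finType := ('I_Q * 'I_m'.+1 + OnePiv * 'I_m')%type.
Definition Qc := #|HairT|.

Definition encZs (P : pivT K) (s : nat) : 'I_(Kc (tag P)) :=
  enum_rank ((tagged P, inord s) : CopT (tag P)).
Definition encYs (P : pivT K) : 'I_(Kc (tag P)) :=
  enum_rank ((tagged P, ord0) : CopT (tag P)).
Definition decs j (t : 'I_(Kc j)) : 'I_(K j) * nat :=
  let c := (enum_val t : CopT j) in (c.1, nat_of_ord c.2).
Definition encHs (h : 'I_Q) (s : nat) : 'I_Qc := enum_rank (inl (h, inord s) : HairT).
Definition encEs (P : pivT K) (s : nat) : option 'I_Qc :=
  match insub P with
  | Some P' => match insub s with
               | Some s' => Some (enum_rank (inr (P', s') : HairT))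
               | None => None end
  | None => None end.
Definition dechs (q : 'I_Qc) : ('I_Q * nat) + (pivT K * nat) :=
  match (enum_val q : HairT) with
  | inl (h, s) => inl (h, nat_of_ord s)
  | inr (P', s) => inr (val P', nat_of_ord s)
  end.

Lemma auxF b (u : 'I_(if b then m' else 0).+1) : b = false -> nat_of_ord u = 0.
Proof. by move=> e; move: u; rewrite e => -[[]]. Qed.
Lemma auxT b (u : 'I_(if b then m' else 0).+1) : b = true -> nat_of_ord u < m'.+1.
Proof. by move=> e; move: u; rewrite e => u. Qed.

Lemma step_main0 :
  exists H : word (tvert d K Q) -> Prop,
    [/\ is_subgroup (tree_adj (d:=d) (k:=K) (q:=Q)) H,
        finite_index (tree_adj (d:=d) (k:=K) (q:=Q)) H &
        iso_to_subgroup (tree_adj (d:=d) (k:=Kc) (q:=Qc))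
                        (tree_adj (d:=d) (k:=K) (q:=Q)) H].
Proof.
apply: (@inst_main l d K Kc Q Qc m' xs ones _ encZs encYs decs encHs encEs dechs).
- by rewrite /ones /= eq_sym.
- move=> j t; rewrite /decs /ones /mkP /=.
  case E: (enum_val t) => [a s] /=.
  have hs := ltn_ord s.
  have et : t = enum_rank ((a, s) : CopT j) by rewrite -E enum_valK.
  case: ifP => hj.
  + have hs0 := auxF s (negbTE hj); split; first by [].
    rewrite et /encYs; congr (enum_rank (_, _)); apply: val_inj => /=; by rewrite hs0.
  + move/negbFE: hj => hj; have hs1 := auxT s hj; split => //.
    by rewrite et /encZs /= inord_val.
- move=> P s oP hs; rewrite /decs /encZs enum_rankK /=.
  have hP : tag P == i0 by move: oP; rewrite /ones negbK.
  by rewrite inordK // (eqP hP) eqxx.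
- by move=> P oP; rewrite /decs /encYs enum_rankK.
- move=> q; rewrite /dechs; case E: (enum_val q) => [[h s]|[P' s]].
  + split => //; by rewrite /encHs inord_val -E enum_valK.
  + have /andP[h1 h2] := valP P'; split => //.
    rewrite /encEs valK.
    have -> : insub (nat_of_ord s) = Some s by exact: valK.
    by rewrite -E enum_valK.
- by move=> h s hs; rewrite /dechs /encHs enum_rankK /= inordK.
- move=> P s H; rewrite /encEs; case: insubP => [P' HP eP|] //.
  case: insubP => [s' hs es|] //; exfalso; move: H; case/andP: HP => HP1 HP2.
  by rewrite /ones HP1 HP2 hs.
- move=> P s q; rewrite /encEs; case: insubP => [P' HP eP|] //.
  case: insubP => [s' hs es|] // [<-].
  by rewrite /dechs enum_rankK eP es.
- move=> P s oP nP hs; rewrite /encEs; case: insubP => [P' HP eP|] //.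
    by case: insubP => [s' _ _|] //; rewrite hs.
  by rewrite /ones in oP; rewrite oP nP.
Qed.
End Step.

Lemma step_main l (d K : 'I_l -> nat) Q (i0 j0 : 'I_l) m' :
  i0 != j0 -> 0 < K j0 ->
  exists Q' (H : word (tvert d K Q) -> Prop),
    [/\ is_subgroup (tree_adj (d:=d) (k:=K) (q:=Q)) H,
        finite_index (tree_adj (d:=d) (k:=K) (q:=Q)) H &
        iso_to_subgroup (tree_adj (d:=d) (k:=fun j => if j == i0 then K j * m'.+1 else K j) (q:=Q'))
                        (tree_adj (d:=d) (k:=K) (q:=Q)) H].
Proof.
move=> hij hK; exists (Qc Q i0 m' hK).
have e : Kc K i0 m' = (fun j => if j == i0 then K j * m'.+1 else K j).
  apply: functional_extensionality => j.
  by rewrite /Kc /CopT card_prod !card_ord; case: (j == i0); rewrite ?muln1.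
rewrite -e; exact: step_main0.
Qed.

Definition Kn l (k : 'I_l -> nat) n := fun j : 'I_l => if j < n then k j else 1.

Lemma part1_ind l (v k : 'I_l -> nat) : 2 <= l -> (forall i, 0 < k i) ->
  forall n, n <= l ->
  exists (q : nat) (H : word (tvert v (fun _ => 1) 0) -> Prop),
    [/\ is_subgroup (tree_adj (d:=v) (k:=fun _ => 1) (q:=0)) H,
        finite_index (tree_adj (d:=v) (k:=fun _ => 1) (q:=0)) H &
        iso_to_subgroup (tree_adj (d:=v) (k:=Kn k n) (q:=q))
                        (tree_adj (d:=v) (k:=fun _ => 1) (q:=0)) H].
Proof.
move=> hl hk; elim=> [|n IH] hn.
  have -> : Kn k 0 = (fun _ => 1) by apply: functional_extensionality => j.
  exists 0; exact: base_iso.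
have [q1 [H1 [S1 F1 I1]]] := IH (ltnW hn).
have h0 : 0 < l by lia.
have h1 : 1 < l by lia.
pose i0 : 'I_l := Ordinal hn.
pose j0 : 'I_l := if n == 0 then Ordinal h1 else Ordinal h0.
have hij : i0 != j0.
  rewrite /j0 /i0; case: (n =P 0) => [e0|nz]; apply/eqP => /(congr1 val) /= e; lia.
have hK : 0 < Kn k n j0 by rewrite /Kn; case: ifP.
have [Q' [H2 [S2 F2 I2]]] := @step_main l v (Kn k n) q1 i0 j0 (k i0).-1 hij hK.
have e : (fun j => if j == i0 then Kn k n j * (k i0).-1.+1 else Kn k n j) = Kn k n.+1.
  apply: functional_extensionality => j; rewrite /Kn prednK //.
  case: (eqVneq j i0) => [->|nj]; first by rewrite /= ltnn ltnSn mul1n.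
  have hjn : (nat_of_ord j) != n.
    apply/negP => /eqP e'; move/negP: nj; apply; apply/eqP/val_inj; exact: e'.
  have -> : (j < n.+1) = (j < n) by apply/idP/idP => h; lia.
  by [].
rewrite e in I2.
have [H [S F I]] := compose_iso S1 F1 I1 S2 F2 I2.
by exists Q', H.
Qed.

Theorem part1 (l : nat) (v k : 'I_l -> nat) :
  2 <= l -> (forall i, 0 < k i) ->
  exists (q : nat) (H : word (tvert v (fun _ => 1) 0) -> Prop),
    [/\ is_subgroup (tree_adj (d:=v) (k:=fun _ => 1) (q:=0)) H,
        finite_index (tree_adj (d:=v) (k:=fun _ => 1) (q:=0)) H &
        iso_to_subgroup (tree_adj (d:=v) (k:=k) (q:=q))
                        (tree_adj (d:=v) (k:=fun _ => 1) (q:=0)) H].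
Proof.
move=> hl hk.
have -> : k = Kn k l by apply: functional_extensionality => j; rewrite /Kn ltn_ord.
exact: part1_ind.
Qed.


Theorem mainTheorem6 :
  (forall (l : nat) (v k : 'I_l -> nat),
      2 <= l ->
      (forall i, 0 < v i) ->
      (forall i j : 'I_l, i < j -> v i < v j) ->
      (forall i, 0 < k i) ->
      exists (q : nat) (H : word (tvert v (fun _ => 1) 0) -> Prop),
        [/\ is_subgroup (tree_adj (d:=v) (k:=fun _ => 1) (q:=0)) H,
            finite_index (tree_adj (d:=v) (k:=fun _ => 1) (q:=0)) H &
            iso_to_subgroup (tree_adj (d:=v) (k:=k) (q:=q))
                            (tree_adj (d:=v) (k:=fun _ => 1) (q:=0)) H])
  /\
  (forall d k : nat, 0 < d -> 2 < k ->
      exists H : word (tvert (l:=1) (fun _ => d) (fun _ => 2) 0) -> Prop,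
        [/\ is_subgroup (tree_adj (l:=1) (d:=fun _ => d) (k:=fun _ => 2) (q:=0)) H,
            finite_index (tree_adj (l:=1) (d:=fun _ => d) (k:=fun _ => 2) (q:=0)) H &
            iso_to_subgroup (tree_adj (l:=1) (d:=fun _ => d) (k:=fun _ => k) (q:=0))
                            (tree_adj (l:=1) (d:=fun _ => d) (k:=fun _ => 2) (q:=0)) H]).
Proof.
split.
- move=> l v k hl _ _ hk; exact: part1.
- move=> d k _ hk.
  have -> : k = (k - 2).+2 by lia.
  exact: part2_main.
Qed.
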